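(* Let $T$ be an arbitrary triangle and let $\Gamma_{h,T}$ be an arbitrary open line segment with endpoints on $\partial T$ dividing $T$ into two nonempty open parts $T_h^+$ and $T_h^-$; let $\mathbf{n}_h$ be the unit normal of $\Gamma_{h,T}$ pointing into $T_h^+$. Let $w(\mathbf{x})=\operatorname{dist}(\mathbf{x},\Gamma_{h,T})$ for $\mathbf{x}\in T_h^+$ and $w(\mathbf{x})=0$ for $\mathbf{x}\in T_h^-$. Then $$0\le \nabla\pi^{CR}_{h,T}w\cdot\mathbf{n}_h\le 1.$$
   Context: $\pi^{CR}_{h,T}w$ is the unique linear polynomial on $T$ with $\int_{e_i}\pi^{CR}_{h,T}w=\int_{e_i}w$ for the three edges $e_i$ of $T$ (so $\nabla\pi^{CR}_{h,T}w$ is a constant vector). *)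

(* Defs.v *)
From Stdlib Require Import Reals Lra.
From Coquelicot Require Import Coquelicot.
Open Scope R_scope.

Definition pt := (R * R)%type.

Definition padd (x y : pt) : pt := (fst x + fst y, snd x + snd y).
Definition psub (x y : pt) : pt := (fst x - fst y, snd x - snd y).
Definition pscal (t : R) (x : pt) : pt := (t * fst x, t * snd x).
Definition dot (x y : pt) : R := fst x * fst y + snd x * snd y.
Definition pnorm (x : pt) : R := sqrt (dot x x).
Definition cross (x y : pt) : R := fst x * snd y - snd x * fst y.

Definition nondegenerate (a b c : pt) : Prop := cross (psub b a) (psub c a) <> 0.

Definition bary (a b c : pt) (l1 l2 l3 : R) (x : pt) : Prop :=
  l1 + l2 + l3 = 1 /\
  x = padd (pscal l1 a) (padd (pscal l2 b) (pscal l3 c)).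

Definition in_tri (a b c x : pt) : Prop :=
  exists l1 l2 l3, 0 < l1 /\ 0 < l2 /\ 0 < l3 /\ bary a b c l1 l2 l3 x.

Definition in_cl_tri (a b c x : pt) : Prop :=
  exists l1 l2 l3, 0 <= l1 /\ 0 <= l2 /\ 0 <= l3 /\ bary a b c l1 l2 l3 x.

Definition on_bdry (a b c x : pt) : Prop := in_cl_tri a b c x /\ ~ in_tri a b c x.

Definition in_open_seg (p q x : pt) : Prop :=
  exists t, 0 < t < 1 /\ x = padd p (pscal t (psub q p)).

Definition dist_seg (p q x : pt) : R :=
  real (Glb_Rbar (fun r => exists y, in_open_seg p q y /\ r = pnorm (psub x y))).

Definition edge_int (f : pt -> R) (u v : pt) : R :=
  pnorm (psub v u) * RInt (fun t => f (padd u (pscal t (psub v u)))) 0 1.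

Definition is_CR_interp (a b c : pt) (w : pt -> R) (g : pt) (c0 : R) : Prop :=
  let P := fun x => dot g x + c0 in
  edge_int P a b = edge_int w a b /\
  edge_int P b c = edge_int w b c /\
  edge_int P c a = edge_int w c a.

(* This is the
   continuous extension to the closed triangle used to take edge traces. *)
Definition w_fun (p q n : pt) (x : pt) : R :=
  if Rlt_dec 0 (dot (psub x p) n) then dist_seg p q x else 0.

(* Main.v *)
Require Import Defs.
From Stdlib Require Import Reals Lra.
From Coquelicot Require Import Coquelicot.
Open Scope R_scope.


Definition Dt (a b c : pt) := cross (psub b a) (psub c a).
Definition l2 (a b c x : pt) := cross (psub x a) (psub c a) / Dt a b c.
Definition l3 (a b c x : pt) := cross (psub b a) (psub x a) / Dt a b c.
Definition l1 (a b c x : pt) := 1 - l2 a b c x - l3 a b c x.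

Lemma pt_eq (x y : pt) : fst x = fst y -> snd x = snd y -> x = y.
Proof. destruct x, y; simpl; intros; subst; reflexivity. Qed.

Lemma bary_eq a b c L1 L2 L3 x : Dt a b c <> 0 -> bary a b c L1 L2 L3 x ->
  l1 a b c x = L1 /\ l2 a b c x = L2 /\ l3 a b c x = L3.
Proof.
  intros hD [hs ->]. destruct a as [a1 a2], b as [b1 b2], c as [c1 c2].
  unfold l1, l2, l3, Dt in *; unfold cross, psub, padd, pscal in *; simpl in *.
  assert (L1 = 1 - L2 - L3) by lra. subst L1.
  split; [|split]; field; auto.
Qed.

Lemma bary_l a b c x : Dt a b c <> 0 -> bary a b c (l1 a b c x) (l2 a b c x) (l3 a b c x) x.
Proof.
  intros hD. destruct a as [a1 a2], b as [b1 b2], c as [c1 c2], x as [x1 x2].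
  unfold bary, l1, l2, l3, Dt in *; unfold cross, psub, padd, pscal in *; simpl in *.
  split; [ring|]. apply pt_eq; simpl; field; auto.
Qed.

Lemma cl_char a b c x : Dt a b c <> 0 ->
  (in_cl_tri a b c x <-> 0 <= l1 a b c x /\ 0 <= l2 a b c x /\ 0 <= l3 a b c x).
Proof.
  intros hD; split.
  - intros (L1 & L2 & L3 & h1 & h2 & h3 & hb).
    destruct (bary_eq _ _ _ _ _ _ _ hD hb) as (e1 & e2 & e3). rewrite e1, e2, e3; auto.
  - intros (h1 & h2 & h3). exists (l1 a b c x), (l2 a b c x), (l3 a b c x).
    repeat split; auto; apply bary_l; auto.
Qed.

Lemma op_char a b c x : Dt a b c <> 0 ->
  (in_tri a b c x <-> 0 < l1 a b c x /\ 0 < l2 a b c x /\ 0 < l3 a b c x).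
Proof.
  intros hD; split.
  - intros (L1 & L2 & L3 & h1 & h2 & h3 & hb).
    destruct (bary_eq _ _ _ _ _ _ _ hD hb) as (e1 & e2 & e3). rewrite e1, e2, e3; auto.
  - intros (h1 & h2 & h3). exists (l1 a b c x), (l2 a b c x), (l3 a b c x).
    repeat split; auto; apply bary_l; auto.
Qed.

Definition affine (l : pt -> R) := exists al1 al2 be, forall x, l x = al1 * fst x + al2 * snd x + be.

Lemma l_affine a b c : Dt a b c <> 0 ->
  affine (l1 a b c) /\ affine (l2 a b c) /\ affine (l3 a b c).
Proof.
  intros hD.
  assert (H2 : affine (l2 a b c)).
  { destruct a as [a1 a2], b as [b1 b2], c as [c1 c2];
    unfold affine, l1, l2, l3, Dt in *; unfold cross, psub in *; simpl in *.
    exists ((c2 - a2)/((b1 - a1) * (c2 - a2) - (b2 - a2) * (c1 - a1))),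
      (-(c1 - a1)/ ((b1 - a1) * (c2 - a2) - (b2 - a2) * (c1 - a1))),
      (-((c2 - a2)/((b1 - a1) * (c2 - a2) - (b2 - a2) * (c1 - a1))) * a1
       -(-(c1 - a1)/ ((b1 - a1) * (c2 - a2) - (b2 - a2) * (c1 - a1))) * a2).
    intros [x1 x2]; simpl; field; auto. }
  assert (H3 : affine (l3 a b c)).
  { destruct a as [a1 a2], b as [b1 b2], c as [c1 c2];
    unfold affine, l1, l2, l3, Dt in *; unfold cross, psub in *; simpl in *.
    exists (-(b2-a2)/ ((b1 - a1) * (c2 - a2) - (b2 - a2) * (c1 - a1))),
      ((b1 - a1)/((b1 - a1) * (c2 - a2) - (b2 - a2) * (c1 - a1))),
      (-(-(b2-a2)/ ((b1 - a1) * (c2 - a2) - (b2 - a2) * (c1 - a1))) * a1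
       -((b1 - a1)/((b1 - a1) * (c2 - a2) - (b2 - a2) * (c1 - a1))) * a2).
    intros [x1 x2]; simpl; field; auto. }
  split; auto.
  destruct H2 as (p1 & p2 & pb & hp2), H3 as (q1 & q2 & qb & hq3).
  exists (-p1-q1), (-p2-q2), (1-pb-qb). intros x; unfold l1; rewrite hp2, hq3; ring.
Qed.

Lemma aff_K (l : pt -> R) (u v xp xm n : pt) (th : R) :
  affine l -> 0 <= l u -> 0 <= l v -> 0 < th < 1 ->
  l (padd u (pscal th (psub v u))) <= 0 -> u <> v ->
  dot n (psub v u) = 0 -> 0 < dot n n ->
  0 < l xp -> 0 < l xm -> 0 < dot (psub xp u) n -> dot (psub xm u) n < 0 -> False.
Proof.
  intros (al1 & al2 & be & hl) hu hv hth hm huv hnd hnn hp hm' hpn hmn.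
  rewrite !hl in *.
  destruct u as [u1 u2], v as [v1 v2], xp as [p1 p2], xm as [m1 m2], n as [n1 n2].
  unfold dot, padd, pscal, psub in *; simpl in *.
  set (lu := al1 * u1 + al2 * u2 + be) in *.
  set (lv := al1 * v1 + al2 * v2 + be) in *.
  assert (hm2 : al1 * (u1 + th * (v1 - u1)) + al2 * (u2 + th * (v2 - u2)) + be
     = (1 - th) * lu + th * lv) by (unfold lu, lv; ring).
  rewrite hm2 in hm.
  assert (h1 : 0 <= (1 - th) * lu) by (apply Rmult_le_pos; lra).
  assert (h2 : 0 <= th * lv) by (apply Rmult_le_pos; lra).
  assert (h3 : th * lv = 0) by lra.
  assert (h4 : (1-th) * lu = 0) by lra.
  assert (lv0 : lv = 0).
  { destruct (Rmult_integral _ _ h3); lra. }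
  assert (lu0 : lu = 0).
  { destruct (Rmult_integral _ _ h4); lra. }
  assert (had : al1 * (v1 - u1) + al2 * (v2 - u2) = 0) by (unfold lu, lv in *; lra).
  assert (hcr : al1 * n2 - al2 * n1 = 0).
  { assert (e1 : (al1 * n2 - al2 * n1) * (v1 - u1) = 0).
    { replace ((al1 * n2 - al2 * n1) * (v1 - u1)) with
        (n2 * (al1 * (v1 - u1) + al2 * (v2 - u2)) - al2 * (n1 * (v1 - u1) + n2 * (v2 - u2))) by ring.
      rewrite had, hnd; ring. }
    assert (e2 : (al1 * n2 - al2 * n1) * (v2 - u2) = 0).
    { replace ((al1 * n2 - al2 * n1) * (v2 - u2)) with
        (al1 * (n1 * (v1 - u1) + n2 * (v2 - u2)) - n1 * (al1 * (v1 - u1) + al2 * (v2 - u2))) by ring.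
      rewrite had, hnd; ring. }
    destruct (Req_dec (v1 - u1) 0) as [z1|z1].
    - destruct (Req_dec (v2 - u2) 0) as [z2|z2].
      + exfalso; apply huv; f_equal; lra.
      + destruct (Rmult_integral _ _ e2); lra.
    - destruct (Rmult_integral _ _ e1); lra. }
  set (k := al1 * n1 + al2 * n2).
  assert (kp : forall x1 x2, (al1 * x1 + al2 * x2 + be) * (n1 * n1 + n2 * n2)
     = k * ((x1 - u1) * n1 + (x2 - u2) * n2)).
  { intros x1 x2. unfold k.
    replace ((al1 * x1 + al2 * x2 + be)) with (al1 * (x1 - u1) + al2 * (x2 - u2) + lu) by (unfold lu; ring).
    rewrite lu0.
    replace ((al1 * (x1 - u1) + al2 * (x2 - u2) + 0) * (n1 * n1 + n2 * n2)) with
     ((al1 * n1 + al2 * n2) * ((x1 - u1) * n1 + (x2 - u2) * n2) + (al1 * n2 - al2 * n1) * (n2 * (x1 - u1) - n1 * (x2 - u2))) by ring.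
    rewrite hcr; ring. }
  pose proof (kp p1 p2) as kp1. pose proof (kp m1 m2) as kp2.
  assert (0 < (al1 * p1 + al2 * p2 + be) * (n1 * n1 + n2 * n2)) by (apply Rmult_lt_0_compat; lra).
  assert (0 < (al1 * m1 + al2 * m2 + be) * (n1 * n1 + n2 * n2)) by (apply Rmult_lt_0_compat; lra).
  destruct (Rlt_le_dec 0 k) as [kpos|kneg].
  - assert (k * ((m1 - u1) * n1 + (m2 - u2) * n2) < 0).
    { apply Rmult_lt_reg_l with (/k). apply Rinv_0_lt_compat; lra.
      rewrite <- Rmult_assoc, Rinv_l by lra. lra. }
    lra.
  - assert (k * ((p1 - u1) * n1 + (p2 - u2) * n2) <= 0).
    { apply Rmult_le_0_r; lra. }
    lra.
Qed.

Lemma interior_pt a b c (u v xp xm n : pt) (th : R) :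
  Dt a b c <> 0 -> in_cl_tri a b c u -> in_cl_tri a b c v -> 0 < th < 1 -> u <> v ->
  dot n (psub v u) = 0 -> 0 < dot n n ->
  in_tri a b c xp -> in_tri a b c xm -> 0 < dot (psub xp u) n -> dot (psub xm u) n < 0 ->
  in_tri a b c (padd u (pscal th (psub v u))).
Proof.
  intros hD hu hv hth huv hnd hnn hxp hxm hpn hmn.
  apply (cl_char _ _ _ _ hD) in hu. apply (cl_char _ _ _ _ hD) in hv.
  apply (op_char _ _ _ _ hD) in hxp. apply (op_char _ _ _ _ hD) in hxm.
  apply (op_char _ _ _ _ hD).
  destruct (l_affine _ _ _ hD) as (A1 & A2 & A3).
  repeat split.
  - destruct (Rlt_le_dec 0 (l1 a b c (padd u (pscal th (psub v u))))) as [h|h]; auto.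
    exfalso; eapply (aff_K _ u v xp xm n th A1); try tauto; auto.
  - destruct (Rlt_le_dec 0 (l2 a b c (padd u (pscal th (psub v u))))) as [h|h]; auto.
    exfalso; eapply (aff_K _ u v xp xm n th A2); try tauto; auto.
  - destruct (Rlt_le_dec 0 (l3 a b c (padd u (pscal th (psub v u))))) as [h|h]; auto.
    exfalso; eapply (aff_K _ u v xp xm n th A3); try tauto; auto.
Qed.

Lemma parallel (y r n : pt) : dot n y = 0 -> dot n r = 0 -> 0 < dot n n -> r <> (0,0) ->
  y = pscal (dot y r / dot r r) r.
Proof.
  destruct y as [y1 y2], r as [r1 r2], n as [n1 n2]; unfold dot, pscal; simpl.
  intros h1 h2 hn hr.
  assert (hrr : r1 * r1 + r2 * r2 <> 0).
  { intro E. apply hr. assert (r1 = 0) by nra. assert (r2 = 0) by nra. subst; auto. }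
  assert (hc : y1 * r2 - y2 * r1 = 0).
  { assert (e1 : (y1 * r2 - y2 * r1) * n1 = 0).
    { replace ((y1 * r2 - y2 * r1) * n1) with (r2 * (n1 * y1 + n2 * y2) - y2 * (n1 * r1 + n2 * r2)) by ring.
      rewrite h1, h2; ring. }
    assert (e2 : (y1 * r2 - y2 * r1) * n2 = 0).
    { replace ((y1 * r2 - y2 * r1) * n2) with (y1 * (n1 * r1 + n2 * r2) - r1 * (n1 * y1 + n2 * y2)) by ring.
      rewrite h1, h2; ring. }
    destruct (Req_dec n1 0).
    - destruct (Req_dec n2 0). { subst; lra. }
      destruct (Rmult_integral _ _ e2); lra.
    - destruct (Rmult_integral _ _ e1); lra. }
  assert (E1 : y1 * (r1 * r1 + r2 * r2) = (y1 * r1 + y2 * r2) * r1).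
  { replace (y1 * (r1 * r1 + r2 * r2)) with ((y1 * r1 + y2 * r2) * r1 + r2 * (y1 * r2 - y2 * r1)) by ring.
    rewrite hc; ring. }
  assert (E2 : y2 * (r1 * r1 + r2 * r2) = (y1 * r1 + y2 * r2) * r2).
  { replace (y2 * (r1 * r1 + r2 * r2)) with ((y1 * r1 + y2 * r2) * r2 - r1 * (y1 * r2 - y2 * r1)) by ring.
    rewrite hc; ring. }
  apply pt_eq; simpl.
  - apply (Rmult_eq_reg_r (r1 * r1 + r2 * r2)); auto. rewrite E1. field; auto.
  - apply (Rmult_eq_reg_r (r1 * r1 + r2 * r2)); auto. rewrite E2. field; auto.
Qed.

Lemma lineG a b c p q n z :
  Dt a b c <> 0 -> on_bdry a b c p -> on_bdry a b c q -> p <> q ->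
  dot n (psub q p) = 0 -> 0 < dot n n ->
  (exists x, in_tri a b c x /\ 0 < dot (psub x p) n) ->
  (exists x, in_tri a b c x /\ dot (psub x p) n < 0) ->
  in_cl_tri a b c z -> dot (psub z p) n = 0 ->
  exists t, 0 <= t <= 1 /\ z = padd p (pscal t (psub q p)).
Proof.
  intros hD [hpc hpo] [hqc hqo] hpq hnq hnn [xp [hxp hxps]] [xm [hxm hxms]] hz hzn.
  assert (hr : psub q p <> (0,0)).
  { intro E. apply hpq. destruct p, q; unfold psub in E; simpl in E; injection E; intros.
    f_equal; lra. }
  assert (hy : dot n (psub z p) = 0) by (unfold dot in *; lra).
  pose proof (parallel _ _ _ hy hnq hnn hr) as hpar.
  set (t := dot (psub z p) (psub q p) / dot (psub q p) (psub q p)) in *.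
  assert (hz' : z = padd p (pscal t (psub q p))).
  { destruct z, p, q; unfold padd, psub, pscal in *; simpl in *; injection hpar; intros.
    apply pt_eq; simpl; lra. }
  clearbody t. clear hpar.
  destruct (Rlt_le_dec 1 t) as [t1|t1].
  - exfalso. apply hqo.
    replace q with (padd p (pscal (/t) (psub z p))).
    2:{ rewrite hz'. destruct p, q; unfold padd, psub, pscal; simpl; apply pt_eq; simpl; field; lra. }
    apply (interior_pt a b c p z xp xm n); auto.
    + split. apply Rinv_0_lt_compat; lra. rewrite <- Rinv_1. apply Rinv_lt_contravar; lra.
    + intro E; rewrite <- E in hz'. clear -hz' hpq t1. destruct p, q; unfold padd, psub, pscal in *; simpl in *; injection hz'; intros.
      apply hpq. assert (t * (r1 - r) = 0) by lra. assert (t * (r2 - r0) = 0) by lra.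
      destruct (Rmult_integral _ _ H1); destruct (Rmult_integral _ _ H2); try lra.
      f_equal; lra.
  - destruct (Rlt_le_dec t 0) as [t0|t0].
    + exfalso. apply hpo.
      replace p with (padd q (pscal (/(1-t)) (psub z q))).
      2:{ rewrite hz'. destruct p, q; unfold padd, psub, pscal; simpl; apply pt_eq; simpl; field; lra. }
      apply (interior_pt a b c q z xp xm n); auto.
      * split. apply Rinv_0_lt_compat; lra. rewrite <- Rinv_1. apply Rinv_lt_contravar; lra.
      * intro E; rewrite <- E in hz'. clear -hz' hpq t0. destruct p, q; unfold padd, psub, pscal in *; simpl in *; injection hz'; intros.
        apply hpq. assert ((1 - t) * (r1 - r) = 0) by lra. assert ((1-t) * (r2 - r0) = 0) by lra.
        destruct (Rmult_integral _ _ H1); destruct (Rmult_integral _ _ H2); try lra.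
        f_equal; lra.
      * destruct z, p, q; unfold dot, psub in *; simpl in *; lra.
      * destruct xp, p, q, n; unfold dot, psub in *; simpl in *; lra.
      * destruct xm, p, q, n; unfold dot, psub in *; simpl in *; lra.
    + exists t; split; auto.
Qed.

Lemma pnorm_pos x : 0 <= pnorm x.
Proof. unfold pnorm; apply sqrt_pos. Qed.

Lemma dot_pos x : 0 <= dot x x.
Proof. destruct x; unfold dot; simpl; nra. Qed.

Lemma pnorm_sq x : pnorm x * pnorm x = dot x x.
Proof. unfold pnorm; apply sqrt_sqrt, dot_pos. Qed.

Lemma cauchy u v : dot u v <= pnorm u * pnorm v.
Proof.
  destruct (Rle_dec (dot u v) 0) as [h|h].
  - pose proof (Rmult_le_pos _ _ (pnorm_pos u) (pnorm_pos v)); lra.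
  - assert (hs : (dot u v) * (dot u v) <= dot u u * dot v v).
    { destruct u as [u1 u2], v as [v1 v2]; unfold dot; simpl.
      pose proof (Rle_0_sqr (u1 * v2 - u2 * v1)) as hq; unfold Rsqr in hq.
      replace ((u1 * u1 + u2 * u2) * (v1 * v1 + v2 * v2)) with
        ((u1 * v1 + u2 * v2) * (u1 * v1 + u2 * v2) + (u1 * v2 - u2 * v1) * (u1 * v2 - u2 * v1)) by ring.
      lra. }
    rewrite <- !pnorm_sq in hs.
    pose proof (pnorm_pos u); pose proof (pnorm_pos v).
    apply Rnot_le_lt in h.
    destruct (Rle_dec (dot u v) (pnorm u * pnorm v)); auto.
    exfalso. assert (pnorm u * pnorm v < dot u v) by lra.
    assert (pnorm u * pnorm v * (pnorm u * pnorm v) < dot u v * dot u v).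
    { apply Rmult_le_0_lt_compat; try lra; apply Rmult_le_pos; auto. }
    nra.
Qed.

Lemma sqrt_le_sq a b : 0 <= b -> a <= b * b -> sqrt a <= b.
Proof.
  intros hb hab. rewrite <- (sqrt_square b hb). apply sqrt_le_1_alt; auto.
Qed.

Lemma pnorm_tri x y z : pnorm (psub x z) <= pnorm (psub x y) + pnorm (psub y z).
Proof.
  pose proof (cauchy (psub x y) (psub y z)) as hc.
  pose proof (pnorm_sq (psub x y)); pose proof (pnorm_sq (psub y z)).
  pose proof (pnorm_pos (psub x y)); pose proof (pnorm_pos (psub y z)).
  unfold pnorm at 1. apply sqrt_le_sq; [lra|].
  assert (dot (psub x z) (psub x z) = dot (psub x y) (psub x y) + 2 * dot (psub x y) (psub y z) + dot (psub y z) (psub y z)).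
  { destruct x, y, z; unfold dot, psub; simpl; ring. }
  nra.
Qed.

Lemma pnorm_scal t v : pnorm (pscal t v) = Rabs t * pnorm v.
Proof.
  unfold pnorm. replace (dot (pscal t v) (pscal t v)) with ((t*t) * dot v v)
    by (destruct v; unfold dot, pscal; simpl; ring).
  rewrite sqrt_mult_alt by nra. f_equal. 
  replace (t * t) with (Rsqr t) by reflexivity. apply sqrt_Rsqr_abs.
Qed.

Lemma pnorm_sym x y : pnorm (psub x y) = pnorm (psub y x).
Proof. unfold pnorm; f_equal; destruct x, y; unfold dot, psub; simpl; ring. Qed.

Lemma pnorm_zero x : pnorm (psub x x) = 0.
Proof. unfold pnorm. replace (dot (psub x x) (psub x x)) with 0 by (destruct x; unfold dot, psub; simpl; ring).
  apply sqrt_0. Qed.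

Lemma dist_props p q x :
  (forall y, in_open_seg p q y -> dist_seg p q x <= pnorm (psub x y)) /\
  (forall m, (forall y, in_open_seg p q y -> m <= pnorm (psub x y)) -> m <= dist_seg p q x).
Proof.
  unfold dist_seg.
  set (S := fun r => exists y, in_open_seg p q y /\ r = pnorm (psub x y)).
  destruct (Glb_Rbar_correct S) as [hlb hgr].
  assert (hy0 : in_open_seg p q (padd p (pscal (1/2) (psub q p)))).
  { exists (1/2); split; [lra|auto]. }
  assert (hS0 : S (pnorm (psub x (padd p (pscal (1/2) (psub q p)))))).
  { exists (padd p (pscal (1/2) (psub q p))); split; auto. }
  assert (h0 : Rbar_le 0 (Glb_Rbar S)).
  { apply hgr. intros r [y [_ ->]]. simpl. apply pnorm_pos. }
  pose proof (hlb _ hS0) as h1.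
  destruct (Glb_Rbar S) as [g| |] eqn:E; simpl in h0, h1; try contradiction.
  simpl. split.
  - intros y hy. pose proof (hlb (pnorm (psub x y))) as h. simpl in h. apply h. exists y; auto.
  - intros m hm. assert (Rbar_le m (Finite g)).
    { apply hgr. intros r [y [hy ->]]. simpl. auto. }
    simpl in H; auto.
Qed.

Lemma dist_nonneg p q x : 0 <= dist_seg p q x.
Proof. apply (proj2 (dist_props p q x)). intros; apply pnorm_pos. Qed.

Lemma dist_lip p q x x' : dist_seg p q x' <= dist_seg p q x + pnorm (psub x' x).
Proof.
  assert (dist_seg p q x' - pnorm (psub x' x) <= dist_seg p q x); [|lra].
  apply (proj2 (dist_props p q x)). intros y hy.
  pose proof (proj1 (dist_props p q x') y hy). pose proof (pnorm_tri x' x y). lra.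
Qed.

Lemma dist_closed p q x t : 0 <= t <= 1 ->
  dist_seg p q x <= pnorm (psub x (padd p (pscal t (psub q p)))).
Proof.
  intros ht. set (y := padd p (pscal t (psub q p))).
  destruct (Rle_dec (dist_seg p q x) (pnorm (psub x y))) as [h|h]; auto.
  exfalso. apply Rnot_le_lt in h.
  set (eps := dist_seg p q x - pnorm (psub x y)).
  set (N := pnorm (psub q p)).
  assert (hN : 0 <= N) by apply pnorm_pos.
  set (d := Rmin (1/4) (eps / (2 * (N + 1)))).
  assert (hd0 : 0 < d).
  { unfold d. apply Rmin_glb_lt; [lra|]. apply Rdiv_lt_0_compat; unfold eps; lra. }
  assert (hd1 : d <= 1/4) by apply Rmin_l.
  assert (hd2 : d <= eps / (2 * (N + 1))) by apply Rmin_r.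
  assert (hdN : d * N < eps).
  { assert (d * N <= eps / (2 * (N+1)) * N) by (apply Rmult_le_compat_r; auto).
    assert (eps / (2 * (N+1)) * N < eps).
    { apply Rmult_lt_reg_r with (2 * (N + 1)); [lra|].
      field_simplify; [|lra]. unfold eps; nra. }
    lra. }
  set (t' := if Rle_dec t (1/2) then t + d else t - d).
  assert (ht' : 0 < t' < 1 /\ Rabs (t' - t) = d).
  { unfold t'; destruct (Rle_dec t (1/2)).
    - split; [lra|]. replace (t + d - t) with d by ring. apply Rabs_pos_eq; lra.
    - split; [lra|]. replace (t - d - t) with (-d) by ring. rewrite Rabs_Ropp. apply Rabs_pos_eq; lra. }
  set (y' := padd p (pscal t' (psub q p))).
  assert (hy' : in_open_seg p q y') by (exists t'; split; [lra|auto]).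
  pose proof (proj1 (dist_props p q x) y' hy').
  pose proof (pnorm_tri x y y').
  assert (psub y y' = pscal (t - t') (psub q p)) by
    (unfold y, y'; destruct p, q; unfold padd, psub, pscal; simpl; apply pt_eq; simpl; ring).
  rewrite H1, pnorm_scal in H0. fold N in H0.
  rewrite <- Rabs_Ropp in H0. replace (- (t - t')) with (t' - t) in H0 by ring.
  destruct ht' as [_ ht']. rewrite ht' in H0. unfold eps in hdN. lra.
Qed.

Lemma dist_mono p q n x e : dot n (psub q p) = 0 -> 0 < dot (psub x p) n -> 0 <= e ->
  dist_seg p q x <= dist_seg p q (padd x (pscal e n)).
Proof.
  intros hnq hx he. apply (proj2 (dist_props p q _)). intros y [t [ht ->]].
  eapply Rle_trans. apply (proj1 (dist_props p q x)). exists t; auto.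
  unfold pnorm. apply sqrt_le_1_alt.
  assert (dot (psub x (padd p (pscal t (psub q p)))) n = dot (psub x p) n).
  { destruct x, p, q, n; unfold dot, psub, padd, pscal in *; simpl in *. nra. }
  set (z := psub x (padd p (pscal t (psub q p)))) in *.
  replace (psub (padd x (pscal e n)) (padd p (pscal t (psub q p)))) with (padd z (pscal e n))
    by (unfold z; destruct x, p, q, n; unfold psub, padd, pscal; simpl; apply pt_eq; simpl; ring).
  replace (dot (padd z (pscal e n)) (padd z (pscal e n))) with
    (dot z z + 2 * e * dot z n + e * e * dot n n) by (destruct z, n; unfold dot, padd, pscal; simpl; ring).
  pose proof (dot_pos n). assert (0 <= e * e * dot n n) by (apply Rmult_le_pos; nra).
  assert (0 <= 2 * e * dot z n) by (apply Rmult_le_pos; lra). lra.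
Qed.

Definition setup a b c p q n := Dt a b c <> 0 /\ on_bdry a b c p /\ on_bdry a b c q /\ p <> q /\
  dot n (psub q p) = 0 /\ dot n n = 1 /\
  (exists x, in_tri a b c x /\ 0 < dot (psub x p) n) /\
  (exists x, in_tri a b c x /\ dot (psub x p) n < 0).

Lemma line_dist a b c p q n z z' : setup a b c p q n -> in_cl_tri a b c z -> dot (psub z p) n = 0 ->
  dist_seg p q z' <= pnorm (psub z' z).
Proof.
  intros (hD & hp & hq & hpq & hnq & hnn & hP & hM) hz hzn.
  destruct (lineG a b c p q n z hD hp hq hpq hnq ltac:(lra) hP hM hz hzn) as [t [ht ->]].
  apply dist_closed; auto.
Qed.

Lemma aff_comb l x y th : affine l -> l (padd x (pscal th (psub y x))) = (1 - th) * l x + th * l y.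
Proof.
  intros (a1 & a2 & b & hl). rewrite !hl. destruct x, y; unfold padd, pscal, psub; simpl; ring.
Qed.

Lemma cl_convex a b c x y th : Dt a b c <> 0 -> in_cl_tri a b c x -> in_cl_tri a b c y -> 0 <= th <= 1 ->
  in_cl_tri a b c (padd x (pscal th (psub y x))).
Proof.
  intros hD hx hy ht. apply (cl_char _ _ _ _ hD) in hx. apply (cl_char _ _ _ _ hD) in hy.
  apply (cl_char _ _ _ _ hD). destruct (l_affine _ _ _ hD) as (A1 & A2 & A3).
  rewrite !aff_comb by auto.
  repeat split; apply Rplus_le_le_0_compat; apply Rmult_le_pos; lra.
Qed.

Lemma mixed a b c p q n x y : setup a b c p q n -> in_cl_tri a b c x -> in_cl_tri a b c y ->
  0 < dot (psub x p) n -> dot (psub y p) n <= 0 -> dist_seg p q x <= pnorm (psub x y).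
Proof.
  intros hs hx hy h1 h2. pose proof hs as (hD & _).
  set (th := dot (psub x p) n / (dot (psub x p) n - dot (psub y p) n)).
  assert (hth : 0 <= th <= 1).
  { unfold th; split. apply Rlt_le, Rdiv_lt_0_compat; lra.
    apply Rmult_le_reg_r with (dot (psub x p) n - dot (psub y p) n); [lra|].
    field_simplify; lra. }
  set (z := padd x (pscal th (psub y x))).
  assert (hz : in_cl_tri a b c z) by (apply cl_convex; auto).
  assert (hzn : dot (psub z p) n = 0).
  { replace (dot (psub z p) n) with (dot (psub x p) n + th * (dot (psub y p) n - dot (psub x p) n))
      by (unfold z; destruct x, y, p, n; unfold dot, psub, padd, pscal; simpl; ring).
    unfold th; field; lra. }
  eapply Rle_trans. apply (line_dist a b c p q n z x hs hz hzn).
  replace (psub x z) with (pscal (-th) (psub y x))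
    by (unfold z; destruct x, y; unfold psub, padd, pscal; simpl; apply pt_eq; simpl; ring).
  rewrite pnorm_scal, Rabs_Ropp, Rabs_pos_eq by lra. rewrite pnorm_sym.
  pose proof (pnorm_pos (psub x y)). nra.
Qed.

Lemma w_nonneg p q n x : 0 <= w_fun p q n x.
Proof. unfold w_fun; destruct Rlt_dec; [apply dist_nonneg|lra]. Qed.

Lemma w_lip a b c p q n x y : setup a b c p q n -> in_cl_tri a b c x -> in_cl_tri a b c y ->
  Rabs (w_fun p q n x - w_fun p q n y) <= pnorm (psub x y).
Proof.
  intros hs hx hy. unfold w_fun.
  destruct (Rlt_dec 0 (dot (psub x p) n)) as [h1|h1];
  destruct (Rlt_dec 0 (dot (psub y p) n)) as [h2|h2].
  - apply Rabs_le. pose proof (dist_lip p q x y). pose proof (dist_lip p q y x).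
    rewrite (pnorm_sym y x) in H. lra.
  - rewrite Rminus_0_r, Rabs_pos_eq by apply dist_nonneg. apply (mixed a b c p q n); auto; lra.
  - rewrite Rminus_0_l, Rabs_Ropp, Rabs_pos_eq by apply dist_nonneg. rewrite pnorm_sym.
    apply (mixed a b c p q n); auto; lra.
  - rewrite Rminus_0_r, Rabs_R0. apply pnorm_pos.
Qed.

Lemma pnorm_n n : dot n n = 1 -> pnorm n = 1.
Proof. intros h; unfold pnorm; rewrite h; apply sqrt_1. Qed.

Lemma w_vert a b c p q n x e : setup a b c p q n -> in_cl_tri a b c x ->
  in_cl_tri a b c (padd x (pscal e n)) -> 0 <= e ->
  0 <= w_fun p q n (padd x (pscal e n)) - w_fun p q n x <= e.
Proof.
  intros hs hx hy he. pose proof hs as (hD & _ & _ & _ & hnq & hnn & _).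
  split.
  - destruct (Rlt_dec 0 (dot (psub x p) n)) as [h1|h1].
    + unfold w_fun. destruct (Rlt_dec 0 (dot (psub x p) n)); [|contradiction].
      destruct (Rlt_dec 0 (dot (psub (padd x (pscal e n)) p) n)) as [h2|h2].
      * pose proof (dist_mono p q n x e hnq h1 he). lra.
      * exfalso; apply h2.
        replace (dot (psub (padd x (pscal e n)) p) n) with (dot (psub x p) n + e * dot n n)
          by (destruct x, p, n; unfold dot, psub, padd, pscal; simpl; ring).
        rewrite hnn; lra.
    + assert (w_fun p q n x = 0) by (unfold w_fun; destruct Rlt_dec; [contradiction|auto]).
      pose proof (w_nonneg p q n (padd x (pscal e n))). lra.
  - pose proof (w_lip a b c p q n _ _ hs hy hx).
    replace (psub (padd x (pscal e n)) x) with (pscal e n) in H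
      by (destruct x, n; unfold psub, padd, pscal; simpl; apply pt_eq; simpl; ring).
    rewrite pnorm_scal, (pnorm_n n hnn), (Rabs_pos_eq e he) in H.
    apply Rabs_le_between in H. lra.
Qed.

Lemma lip_cont (G : R -> R) L z : 0 <= L -> (forall s t, Rabs (G t - G s) <= L * Rabs (t - s)) ->
  continuous G z.
Proof.
  intros hL hG. apply continuity_pt_filterlim.
  unfold continuity_pt, continue_in, limit1_in, limit_in. intros eps heps.
  exists (eps / (L + 1)). split. apply Rdiv_lt_0_compat; lra.
  intros x [_ hx]. simpl in *. unfold R_dist in *.
  eapply Rle_lt_trans. apply hG.
  assert (L * Rabs (x - z) <= L * (eps / (L + 1))) by (apply Rmult_le_compat_l; lra).
  assert (L * (eps / (L + 1)) < eps).
  { apply Rmult_lt_reg_r with (L + 1); [lra|]. field_simplify; lra. }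
  lra.
Qed.

Definition clamp t := Rmax 0 (Rmin 1 t).

Lemma clamp_lip s t : Rabs (clamp t - clamp s) <= Rabs (t - s).
Proof.
  unfold clamp, Rmax, Rmin.
  repeat (destruct Rle_dec); apply Rabs_le; split;
  try (apply Rabs_le_between; apply Rle_refl) ;
  pose proof (Rabs_le_between (t - s) (Rabs (t - s))) as [h _];
  specialize (h (Rle_refl _)); lra.
Qed.

Lemma clamp_in t : 0 <= clamp t <= 1.
Proof. unfold clamp, Rmax, Rmin; repeat destruct Rle_dec; lra. Qed.

Lemma clamp_id t : 0 <= t <= 1 -> clamp t = t.
Proof. intros; unfold clamp, Rmax, Rmin; repeat destruct Rle_dec; lra. Qed.

Lemma w_int a b c p q n u v : setup a b c p q n -> in_cl_tri a b c u -> in_cl_tri a b c v ->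
  ex_RInt (fun t => w_fun p q n (padd u (pscal t (psub v u)))) 0 1.
Proof.
  intros hs hu hv. pose proof hs as (hD & _).
  apply ex_RInt_ext with (fun t => w_fun p q n (padd u (pscal (clamp t) (psub v u)))).
  { intros x hx. rewrite Rmin_left, Rmax_right in hx by lra. rewrite clamp_id by lra. auto. }
  apply (@ex_RInt_continuous R_CompleteNormedModule). intros z _.
  apply lip_cont with (pnorm (psub v u)). apply pnorm_pos.
  intros s t.
  eapply Rle_trans. apply (w_lip a b c p q n); auto; apply cl_convex; auto; apply clamp_in.
  replace (psub (padd u (pscal (clamp t) (psub v u))) (padd u (pscal (clamp s) (psub v u))))
    with (pscal (clamp t - clamp s) (psub v u))
    by (destruct u, v; unfold psub, padd, pscal; simpl; apply pt_eq; simpl; ring).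
  rewrite pnorm_scal, Rmult_comm. apply Rmult_le_compat_l. apply pnorm_pos. apply clamp_lip.
Qed.

Lemma RInt_aff al be : RInt (fun t => al * t + be) 0 1 = al / 2 + be.
Proof.
  apply is_RInt_unique.
  set (F := fun t => al * t * t / 2 + be * t).
  assert (H : is_RInt (fun t => al * t + be) 0 1 (minus (F 1) (F 0))).
  { apply (@is_RInt_derive R_CompleteNormedModule F).
    - intros x _. unfold F. auto_derive; auto. field.
    - intros x _. apply continuity_pt_filterlim. apply continuity_pt_plus.
      apply continuity_pt_mult. apply continuity_pt_const. intros ? ?; auto. apply derivable_continuous_pt, derivable_pt_id.
      apply continuity_pt_const. intros ? ?; auto. }
  replace (al / 2 + be) with (minus (F 1) (F 0)); auto.
  unfold F, minus, plus, opp; simpl; field.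
Qed.

Lemma ex_RInt_aff al be : ex_RInt (fun t => al * t + be) 0 1.
Proof.
  apply (@ex_RInt_continuous R_CompleteNormedModule). intros z _.
  apply continuity_pt_filterlim. apply continuity_pt_plus.
  apply continuity_pt_mult. apply continuity_pt_const. intros ? ?; auto. apply derivable_continuous_pt, derivable_pt_id.
  apply continuity_pt_const. intros ? ?; auto.
Qed.

Lemma RInt_kdiff (A B : R -> R) k : ex_RInt A 0 1 -> ex_RInt B 0 1 ->
  RInt (fun t => k * (A t - B t)) 0 1 = k * (RInt A 0 1 - RInt B 0 1).
Proof.
  intros hA hB.
  transitivity (RInt (fun x => scal k (minus (A x) (B x))) 0 1).
  { apply RInt_ext. intros; reflexivity. }
  rewrite (@RInt_scal R_CompleteNormedModule).
  rewrite (@RInt_minus R_CompleteNormedModule) by auto.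
  - unfold scal, minus, plus, opp; simpl; unfold mult; simpl; ring.
  - apply (@ex_RInt_minus R_NormedModule); auto.
Qed.

Lemma ex_RInt_kdiff (A B : R -> R) k : ex_RInt A 0 1 -> ex_RInt B 0 1 ->
  ex_RInt (fun t => k * (A t - B t)) 0 1.
Proof.
  intros hA hB.
  apply (@ex_RInt_scal R_NormedModule (fun x => minus (A x) (B x))). apply (@ex_RInt_minus R_NormedModule); auto.
Qed.

Lemma RInt_cl (F : R -> R) u v : ex_RInt F v (u + v) ->
  ex_RInt (fun t => F (u * t + v)) 0 1 /\ u * RInt (fun t => F (u * t + v)) 0 1 = RInt F v (u + v).
Proof.
  intros hF.
  assert (hF' : ex_RInt F (u * 0 + v) (u * 1 + v)) by (replace (u*0+v) with v by ring; replace (u*1+v) with (u+v) by ring; auto).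
  pose proof (RInt_comp_lin F u v 0 1 hF') as h1.
  pose proof (ex_RInt_comp_lin F u v 0 1 hF') as h2.
  replace (u*0+v) with v in h1 by ring. replace (u*1+v) with (u+v) in h1 by ring.
  destruct (Req_dec u 0) as [u0|u0].
  - subst u. split.
    + apply ex_RInt_ext with (fun _ => F v). intros x _; f_equal; ring.
      apply ex_RInt_const.
    + rewrite Rmult_0_l. replace (0 + v) with v by ring. rewrite RInt_point. reflexivity.
  - assert (hex : ex_RInt (fun t => F (u * t + v)) 0 1).
    { apply ex_RInt_ext with (fun y => scal (/u) (scal u (F (u * y + v)))).
      intros x _. unfold scal; simpl; unfold mult; simpl. field; auto.
      apply (@ex_RInt_scal R_NormedModule); auto. }
    split; auto.
    rewrite <- h1. rewrite (@RInt_scal R_CompleteNormedModule) by auto.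
    unfold scal; simpl; unfold mult; simpl; ring.
Qed.

Definition edge (u v : pt) (t : R) := padd u (pscal t (psub v u)).
Definition Av (f : pt -> R) u v := RInt (fun t => f (edge u v t)) 0 1.

Lemma vec_n v n : cross n v = 0 -> dot n n = 1 -> v = pscal (dot v n) n.
Proof.
  destruct v as [v1 v2], n as [n1 n2]; unfold cross, dot, pscal; simpl; intros h1 h2.
  apply pt_eq; simpl.
  - replace ((v1 * n1 + v2 * n2) * n1) with (v1 * (n1 * n1 + n2 * n2) + n2 * (n1 * v2 - n2 * v1)) by ring.
    rewrite h1, h2; ring.
  - replace ((v1 * n1 + v2 * n2) * n2) with (v2 * (n1 * n1 + n2 * n2) - n1 * (n1 * v2 - n2 * v1)) by ring.
    rewrite h1, h2; ring.
Qed.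

Lemma pair_bound (f : pt -> R) (K : pt -> Prop) n A B e :
  (forall x e, K x -> K (padd x (pscal e n)) -> 0 <= e -> 0 <= f (padd x (pscal e n)) - f x <= e) ->
  K A -> K B -> B = padd A (pscal e n) -> 0 <= e * (f B - f A) <= e * e.
Proof.
  intros hf hA hB ->.
  destruct (Rle_dec 0 e) as [he|he].
  - destruct (hf A e hA hB he). split; [apply Rmult_le_pos; auto|]. apply Rmult_le_compat_l; auto.
  - assert (hA' : A = padd (padd A (pscal e n)) (pscal (-e) n))
      by (destruct A, n; unfold padd, pscal; simpl; apply pt_eq; simpl; ring).
    rewrite hA' in hA. destruct (hf _ (-e) hB hA ltac:(lra)) as [h1 h2].
    rewrite <- hA' in h1, h2. nra.
Qed.

Lemma mainM (X Y Z n g : pt) (c0 lam : R) (f : pt -> R) (K : pt -> Prop) :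
  cross (psub Y X) (psub Z X) <> 0 -> dot n n = 1 -> 0 <= lam <= 1 ->
  cross n Y = cross n X + lam * (cross n Z - cross n X) ->
  (forall t, 0 <= t <= 1 -> K (edge X Y t)) ->
  (forall t, 0 <= t <= 1 -> K (edge Y Z t)) ->
  (forall t, 0 <= t <= 1 -> K (edge X Z t)) ->
  (forall x e, K x -> K (padd x (pscal e n)) -> 0 <= e -> 0 <= f (padd x (pscal e n)) - f x <= e) ->
  ex_RInt (fun t => f (edge X Y t)) 0 1 ->
  ex_RInt (fun t => f (edge Y Z t)) 0 1 ->
  ex_RInt (fun t => f (edge X Z t)) 0 1 ->
  dot g (padd X Y) / 2 + c0 = Av f X Y ->
  dot g (padd Y Z) / 2 + c0 = Av f Y Z ->
  dot g (padd X Z) / 2 + c0 = Av f X Z ->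
  0 <= dot g n <= 1.
Proof.
  intros hD hnn hlam hs KXY KYZ KXZ hf iXY iYZ iXZ E1 E2 E3.
  set (d := edge X Z lam).
  set (dl := dot (psub d Y) n).
  assert (hdY : psub d Y = pscal dl n).
  { apply vec_n; auto.
    assert (cross n (psub d Y) = (cross n X + lam * (cross n Z - cross n X)) - cross n Y)
      by (unfold d, edge; destruct n, X, Y, Z; unfold cross, psub, padd, pscal; simpl; ring).
    rewrite H, hs; ring. }
  assert (hdl : dl <> 0).
  { intro E. apply hD. rewrite E in hdY.
    unfold d, edge in hdY. destruct X as [x1 x2], Y as [y1 y2], Z as [z1 z2], n as [n1 n2].
    unfold cross, psub, padd, pscal in *; simpl in *. injection hdY; intros e2 e1.
    replace y1 with (x1 + lam * (z1 - x1)) by lra. replace y2 with (x2 + lam * (z2 - x2)) by lra. ring. }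
  assert (hQ1 : forall t, edge X Z (lam * t + 0) = padd (edge X Y t) (pscal (t * dl) n)).
  { intros t. unfold d, edge in hdY |- *.
    destruct X as [x1 x2], Y as [y1 y2], Z as [z1 z2], n as [n1 n2].
    unfold psub, padd, pscal in *; simpl in *. injection hdY; intros e2 e1.
    assert (t * (dl * n1) = t * (x1 + lam * (z1 - x1) - y1)) by (rewrite e1; ring).
    assert (t * (dl * n2) = t * (x2 + lam * (z2 - x2) - y2)) by (rewrite e2; ring).
    apply pt_eq; simpl; lra. }
  assert (hQ2 : forall t, edge X Z ((1 - lam) * t + lam) = padd (edge Y Z t) (pscal ((1 - t) * dl) n)).
  { intros t. unfold d, edge in hdY |- *.
    destruct X as [x1 x2], Y as [y1 y2], Z as [z1 z2], n as [n1 n2].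
    unfold psub, padd, pscal in *; simpl in *. injection hdY; intros e2 e1.
    assert ((1 - t) * (dl * n1) = (1 - t) * (x1 + lam * (z1 - x1) - y1)) by (rewrite e1; ring).
    assert ((1 - t) * (dl * n2) = (1 - t) * (x2 + lam * (z2 - x2) - y2)) by (rewrite e2; ring).
    apply pt_eq; simpl; lra. }
  set (F := fun t => f (edge X Z t)).
  assert (i1 : ex_RInt F 0 lam) by (apply (@ex_RInt_Chasles_1 R_CompleteNormedModule) with 1; auto; lra).
  assert (i2 : ex_RInt F lam 1) by (apply (@ex_RInt_Chasles_2 R_CompleteNormedModule) with 0; auto; lra).
  assert (hch : RInt F 0 lam + RInt F lam 1 = RInt F 0 1)
    by (apply (@RInt_Chasles R_CompleteNormedModule); auto).
  destruct (RInt_cl F lam 0 ltac:(replace (lam + 0) with lam by ring; auto)) as [j1 k1].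
  destruct (RInt_cl F (1 - lam) lam ltac:(replace (1 - lam + lam) with 1 by ring; auto)) as [j2 k2].
  replace (lam + 0) with lam in k1 by ring. replace (1 - lam + lam) with 1 in k2 by ring.
  unfold F in j1, j2, k1, k2.
  set (I1 := RInt (fun t => f (edge X Z (lam * t + 0))) 0 1) in *.
  set (I2 := RInt (fun t => f (edge X Z ((1 - lam) * t + lam))) 0 1) in *.
  assert (hJ1 : 0 <= dl * (I1 - Av f X Y) <= dl * dl / 2).
  { unfold I1, Av. rewrite <- RInt_kdiff by auto. split.
    - apply Rle_trans with (RInt (fun t => 0 * t + 0) 0 1); [rewrite RInt_aff; lra|].
      apply RInt_le; [lra| apply ex_RInt_aff | apply ex_RInt_kdiff; auto |].
      intros t ht. rewrite hQ1.
      pose proof (pair_bound f K n (edge X Y t) (padd (edge X Y t) (pscal (t * dl) n)) (t * dl) hf (KXY t ltac:(lra))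
        ltac:(rewrite <- hQ1; apply KXZ; nra) eq_refl) as [b1 b2].
      assert (0 <= t * (dl * (f (padd (edge X Y t) (pscal (t * dl) n)) - f (edge X Y t)))) by lra.
      apply Rmult_le_reg_l with t; [lra|]. lra.
    - apply Rle_trans with (RInt (fun t => (dl * dl) * t + 0) 0 1); [|rewrite RInt_aff; lra].
      apply RInt_le; [lra| apply ex_RInt_kdiff; auto | apply ex_RInt_aff |].
      intros t ht. rewrite hQ1.
      pose proof (pair_bound f K n (edge X Y t) (padd (edge X Y t) (pscal (t * dl) n)) (t * dl) hf (KXY t ltac:(lra))
        ltac:(rewrite <- hQ1; apply KXZ; nra) eq_refl) as [b1 b2].
      apply Rmult_le_reg_l with t; [lra|]. nra. }
  assert (hJ2 : 0 <= dl * (I2 - Av f Y Z) <= dl * dl / 2).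
  { unfold I2, Av. rewrite <- RInt_kdiff by auto. split.
    - apply Rle_trans with (RInt (fun t => 0 * t + 0) 0 1); [rewrite RInt_aff; lra|].
      apply RInt_le; [lra| apply ex_RInt_aff | apply ex_RInt_kdiff; auto |].
      intros t ht. rewrite hQ2.
      pose proof (pair_bound f K n (edge Y Z t) (padd (edge Y Z t) (pscal ((1 - t) * dl) n)) ((1 - t) * dl) hf (KYZ t ltac:(lra))
        ltac:(rewrite <- hQ2; apply KXZ; nra) eq_refl) as [b1 b2].
      apply Rmult_le_reg_l with (1 - t); [lra|]. lra.
    - apply Rle_trans with (RInt (fun t => (- (dl * dl)) * t + dl * dl) 0 1); [|rewrite RInt_aff; lra].
      apply RInt_le; [lra| apply ex_RInt_kdiff; auto | apply ex_RInt_aff |].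
      intros t ht. rewrite hQ2.
      pose proof (pair_bound f K n (edge Y Z t) (padd (edge Y Z t) (pscal ((1 - t) * dl) n)) ((1 - t) * dl) hf (KYZ t ltac:(lra))
        ltac:(rewrite <- hQ2; apply KXZ; nra) eq_refl) as [b1 b2].
      apply Rmult_le_reg_l with (1 - t); [lra|]. nra. }
  assert (hAv : Av f X Z = lam * I1 + (1 - lam) * I2).
  { unfold Av. fold F. rewrite <- hch. unfold F. rewrite <- k1, <- k2. reflexivity. }
  assert (hg : dot g (psub d Y) = dl * dot g n) by (rewrite hdY; unfold dot, pscal; simpl; ring).
  assert (hc : (dot g (padd X Z) / 2 + c0) - lam * (dot g (padd X Y) / 2 + c0) - (1 - lam) * (dot g (padd Y Z) / 2 + c0)
     = dot g (psub d Y) / 2)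
    by (unfold d, edge; unfold dot, psub, padd, pscal; simpl; field).
  rewrite E1, E2, E3, hAv, hg in hc.
  assert (hsum : lam * (dl * (I1 - Av f X Y)) + (1 - lam) * (dl * (I2 - Av f Y Z)) = dl * dl * dot g n / 2).
  { replace (dl * dl * dot g n / 2) with (dl * (dl * dot g n / 2)) by field. rewrite <- hc. ring. }
  assert (hpos : 0 < dl * dl) by nra.
  assert (hb1 : 0 <= dl * dl * dot g n / 2) by nra.
  assert (hb2 : dl * dl * dot g n / 2 <= dl * dl / 2) by nra.
  split.
  - apply Rmult_le_reg_l with (dl * dl / 2); [lra|]. lra.
  - apply Rmult_le_reg_l with (dl * dl / 2); [lra|]. lra.
Qed.

Lemma pnorm_nz u v : u <> v -> pnorm (psub v u) <> 0.
Proof.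
  intros huv E. apply huv. unfold pnorm in E.
  pose proof (dot_pos (psub v u)).
  assert (dot (psub v u) (psub v u) = 0).
  { destruct (Rle_lt_or_eq_dec _ _ H); auto. exfalso. pose proof (sqrt_lt_R0 _ r). lra. }
  destruct u as [u1 u2], v as [v1 v2]; unfold dot, psub in H0; simpl in H0.
  pose proof (Rle_0_sqr (v1 - u1)); pose proof (Rle_0_sqr (v2 - u2)); unfold Rsqr in *.
  assert ((v1 - u1) * (v1 - u1) = 0) by lra. assert ((v2 - u2) * (v2 - u2) = 0) by lra.
  apply Rmult_integral in H3; apply Rmult_integral in H4. f_equal; lra.
Qed.

Lemma edge_eq (u v : pt) (w : pt -> R) g c0 : u <> v ->
  edge_int (fun x => dot g x + c0) u v = edge_int w u v -> dot g (padd u v) / 2 + c0 = Av w u v.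
Proof.
  intros huv h. unfold edge_int in h. apply Rmult_eq_reg_l in h; [|apply pnorm_nz; auto].
  unfold Av, edge. rewrite <- h.
  rewrite (RInt_ext _ (fun t => dot g (psub v u) * t + (dot g u + c0))).
  - rewrite RInt_aff. destruct g, u, v; unfold dot, padd, psub; simpl; field.
  - intros x _. destruct g, u, v; unfold dot, padd, psub, pscal; simpl; ring.
Qed.

Lemma Av_sym (w : pt -> R) u v : ex_RInt (fun t => w (edge u v t)) 0 1 -> Av w u v = Av w v u.
Proof.
  intros hi. set (F := fun t => w (edge u v t)).
  assert (hF : ex_RInt F 1 (-1 + 1)) by (replace (-1 + 1) with 0 by ring; apply (@ex_RInt_swap R_NormedModule); auto).
  destruct (RInt_cl F (-1) 1 hF) as [_ k]. replace (-1 + 1) with 0 in k by ring.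
  pose proof (@opp_RInt_swap R_CompleteNormedModule F 0 1 hi) as hsw. rewrite <- hsw in k.
  unfold Av. fold F.
  replace (RInt (fun t => w (edge v u t)) 0 1) with (RInt (fun t => F (-1 * t + 1)) 0 1).
  - unfold opp in k; simpl in k. lra.
  - apply RInt_ext. intros x _. unfold F, edge. f_equal.
    destruct u, v; unfold padd, pscal, psub; simpl; apply pt_eq; simpl; ring.
Qed.

Lemma lam_exists sx sy sz : (sx <= sy <= sz \/ sz <= sy <= sx) ->
  exists lam, 0 <= lam <= 1 /\ sy = sx + lam * (sz - sx).
Proof.
  intros h. destruct (Req_dec sz sx) as [e|e].
  - exists 0. split; [lra|]. lra.
  - exists ((sy - sx) / (sz - sx)). split; [|field; intro; apply e; lra].
    destruct h as [h|h].
    + assert (sx < sz) by lra. split.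
      * apply Rdiv_le_0_compat; lra.
      * apply Rmult_le_reg_r with (sz - sx); [lra|]. field_simplify; lra.
    + assert (sz < sx) by lra. split.
      * replace ((sy - sx) / (sz - sx)) with ((sx - sy) / (sx - sz)) by (field; lra). apply Rdiv_le_0_compat; lra.
      * replace ((sy - sx) / (sz - sx)) with ((sx - sy) / (sx - sz)) by (field; lra).
        apply Rmult_le_reg_r with (sx - sz); [lra|]. field_simplify; lra.
Qed.

Lemma wrap a b c p q n g c0 X Y Z : setup a b c p q n -> cross (psub Y X) (psub Z X) <> 0 ->
  in_cl_tri a b c X -> in_cl_tri a b c Y -> in_cl_tri a b c Z ->
  (cross n X <= cross n Y <= cross n Z \/ cross n Z <= cross n Y <= cross n X) ->
  dot g (padd X Y) / 2 + c0 = Av (w_fun p q n) X Y ->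
  dot g (padd Y Z) / 2 + c0 = Av (w_fun p q n) Y Z ->
  dot g (padd X Z) / 2 + c0 = Av (w_fun p q n) X Z ->
  0 <= dot g n <= 1.
Proof.
  intros hs hD hX hY hZ ho E1 E2 E3. pose proof hs as (hD0 & _ & _ & _ & _ & hnn & _).
  destruct (lam_exists _ _ _ ho) as [lam [hl hsl]].
  apply (mainM X Y Z n g c0 lam (w_fun p q n) (in_cl_tri a b c)); auto.
  - intros t ht; apply cl_convex; auto.
  - intros t ht; apply cl_convex; auto.
  - intros t ht; apply cl_convex; auto.
  - intros x e h1 h2 h3. apply (w_vert a b c); auto.
  - apply (w_int a b c); auto.
  - apply (w_int a b c); auto.
  - apply (w_int a b c); auto.
Qed.

Lemma E_sym (w : pt -> R) g c0 u v : ex_RInt (fun t => w (edge u v t)) 0 1 ->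
  dot g (padd u v) / 2 + c0 = Av w u v -> dot g (padd v u) / 2 + c0 = Av w v u.
Proof.
  intros hi h. rewrite <- (Av_sym w u v hi). rewrite <- h.
  unfold dot, padd; simpl; field.
Qed.

Theorem lemma4p3 (a b c p q n : pt)
  (hT : nondegenerate a b c)
  (hp : on_bdry a b c p) (hq : on_bdry a b c q) (hpq : p <> q)
  (hn_unit : pnorm n = 1) (hn_perp : dot n (psub q p) = 0)
  (hplus : exists x, in_tri a b c x /\ 0 < dot (psub x p) n)
  (hminus : exists x, in_tri a b c x /\ dot (psub x p) n < 0)
  (g : pt) (c0 : R)
  (hCR : is_CR_interp a b c (w_fun p q n) g c0) :
  0 <= dot g n <= 1.
Proof.
  assert (hnn : dot n n = 1).
  { unfold pnorm in hn_unit. rewrite <- (sqrt_sqrt (dot n n)) by apply dot_pos. rewrite hn_unit; ring. }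
  assert (hD : Dt a b c <> 0) by exact hT.
  assert (hs : setup a b c p q n) by exact (conj hD (conj hp (conj hq (conj hpq (conj hn_perp (conj hnn (conj hplus hminus))))))).
  assert (ha : in_cl_tri a b c a).
  { exists 1, 0, 0. repeat split; try lra. destruct a, b, c; unfold padd, pscal; simpl; apply pt_eq; simpl; ring. }
  assert (hb : in_cl_tri a b c b).
  { exists 0, 1, 0. repeat split; try lra. destruct a, b, c; unfold padd, pscal; simpl; apply pt_eq; simpl; ring. }
  assert (hc : in_cl_tri a b c c).
  { exists 0, 0, 1. repeat split; try lra. destruct a, b, c; unfold padd, pscal; simpl; apply pt_eq; simpl; ring. }
  assert (nab : a <> b) by (intro E; apply hT; unfold nondegenerate; rewrite E; unfold cross, psub; simpl; ring).
  assert (nbc : b <> c) by (intro E; apply hT; unfold nondegenerate; rewrite E; unfold cross, psub; simpl; ring).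
  assert (nca : c <> a) by (intro E; apply hT; unfold nondegenerate; rewrite E; unfold cross, psub; simpl; ring).
  destruct hCR as (h1 & h2 & h3).
  apply edge_eq in h1; auto. apply edge_eq in h2; auto. apply edge_eq in h3; auto.
  pose proof (E_sym _ _ _ _ _ (w_int a b c p q n a b hs ha hb) h1) as h1'.
  pose proof (E_sym _ _ _ _ _ (w_int a b c p q n b c hs hb hc) h2) as h2'.
  pose proof (E_sym _ _ _ _ _ (w_int a b c p q n c a hs hc ha) h3) as h3'.
  unfold nondegenerate in hT.
  destruct (Rle_dec (cross n a) (cross n b)); destruct (Rle_dec (cross n b) (cross n c));
  destruct (Rle_dec (cross n a) (cross n c));
  repeat match goal with H : ~ (_ <= _) |- _ => apply Rnot_le_lt in H end.
  all: first [ exfalso; lra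
    | apply (wrap a b c p q n g c0 a b c); try assumption; lra
    | apply (wrap a b c p q n g c0 a c b); try assumption;
        [intro E; apply hT; unfold cross, psub in *; simpl in *; lra | lra]
    | apply (wrap a b c p q n g c0 b a c); try assumption;
        [intro E; apply hT; unfold cross, psub in *; simpl in *; lra | lra] ].
Qed.
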